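(* Let $\eta > 0$. There is $\alpha_0(\eta)>0$ such that the following holds for every sufficiently large integer $X$ and every $\alpha$ with $\exp(-(\log X)^{3/4 - \eta}) \le \alpha \le \alpha_0(\eta)$: there is a function $f : \{1,\dots,X\} \to [0,1]$ such that (1) $\mathbb{E}_{x \in \{1,\dots,X\}} f(x)= \alpha$; (2) the sum of $f(x) f(y)$ over all $x, y \in \{1,\dots,X\}$ with $x - y$ a perfect square is at most $\frac{1}{100} \alpha^2 X^{3/2}$; (3) the length $X'$ of the longest arithmetic subprogression of $\{1,\dots,X\}$ on which the average of $f$ is at least $2\alpha$ satisfies $X' < X \exp (-(\log (1/\alpha))^{1/3})$. *)

(* Defs.v *)
From Stdlib Require Import Reals ZArith List ClassicalDescription.
Open Scope R_scope.

Definition sumR (l : list nat) (g : nat -> R) : R :=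
  fold_right (fun x acc => g x + acc) 0 l.

Definition is_perfect_square (n : Z) : Prop := exists m : Z, n = (m * m)%Z.

Definition square_pair_sum (X : nat) (f : nat -> R) : R :=
  sumR (seq 1 X) (fun x => sumR (seq 1 X) (fun y =>
    if excluded_middle_informative
         (is_perfect_square (Z.of_nat x - Z.of_nat y)%Z)
    then f x * f y else 0)).

Definition avg_interval (X : nat) (f : nat -> R) : R := sumR (seq 1 X) f / INR X.

Definition avg_AP (a d L : nat) (f : nat -> R) : R :=
  sumR (seq 0 L) (fun j => f (a + d * j)%nat) / INR L.

Definition is_subAP (X a d L : nat) : Prop :=
  (1 <= a)%nat /\ (1 <= d)%nat /\ (1 <= L)%nat /\ (a + d * (L - 1) <= X)%nat.

(* Main.v *)
Require Import Defs.
From Stdlib Require Import Reals ZArith List ClassicalDescription.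
From Stdlib Require Import Lia Lra Psatz Znumtheory Arith FinFun Classical_Prop.

Module MC.
From mathcomp Require Import all_boot.
From mathcomp Require Import zify.
Local Open Scope nat_scope.

Lemma div2_le (n d : nat) : 0 < d -> (n.*2) %/ d <= (n %/ d).*2 + 1.
Proof.
  move=> d0. have := divn_eq n d. have := ltn_pmod n d0. have := divn_eq (n.*2) d.
  have := ltn_pmod (n.*2) d0. set a := n %/ d. set r := n %% d. set b := n.*2 %/ d. set r2 := n.*2 %% d.
  move=> h1 h2 h3 h4. nia.
Qed.

Lemma logn_bin_le p n : prime p -> 0 < n -> p ^ logn p 'C(n.*2, n) <= n.*2.
Proof.
  move=> pp n0.
  have p1 : 1 < p by apply: prime_gt1.
  set T := trunc_log p n.*2.
  have HT : p ^ T <= n.*2 by apply: trunc_logP => //; lia.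
  have HT2 : n.*2 < p ^ T.+1 by apply: trunc_log_ltn.
  suff : logn p 'C(n.*2, n) <= T.
    move=> h; apply: leq_trans HT; by rewrite leq_exp2l.
  have Hf : 'C(n.*2, n) * (n`! * n`!) = (n.*2)`!.
    have := bin_fact (leq_addr n n : n <= n + n). by rewrite addnK -addnn.
  have Hl : logn p (n.*2)`! = logn p 'C(n.*2, n) + (logn p n`! + logn p n`!).
    by rewrite -Hf lognM ?bin_gt0 ?muln_gt0 ?fact_gt0 // ?lognM ?fact_gt0 // -addnn leq_addr.
  rewrite !logn_fact // in Hl.
  have Tle : T <= n.*2.
    apply: (leq_trans (ltnW (ltn_expl T p1))). done.
  have Hext : \sum_(1 <= k < n.+1) n %/ p ^ k = \sum_(1 <= k < (n.*2).+1) n %/ p ^ k.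
    rewrite [RHS](@big_cat_nat _ _ _ n.+1); [|lia|lia]; rewrite /=.
    rewrite [X in _ = _ + X]big1_seq ?addn0 // => k /andP [_]; rewrite mem_index_iota => /andP [hk _].
    apply: divn_small. exact: (leq_trans hk (ltnW (ltn_expl k p1))).
  rewrite Hext in Hl.
  have Hsum : \sum_(1 <= k < (n.*2).+1) n.*2 %/ p ^ k <=
              \sum_(1 <= k < (n.*2).+1) ((n %/ p ^ k).*2 + (k <= T)).
    apply: leq_sum => k _. case: (leqP k T) => hk.
    - by apply: div2_le; rewrite expn_gt0 (ltnW p1).
    - rewrite addn0 divn_small //. apply: (leq_trans HT2). by rewrite leq_exp2l.
  rewrite big_split /= in Hsum.
  have Hcnt : \sum_(1 <= k < (n.*2).+1) (k <= T) <= T.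
    rewrite (@big_cat_nat _ _ _ T.+1); [|lia|lia]; rewrite /=.
    rewrite [X in _ + X]big1_seq ?addn0; last first.
      move=> k /andP [_]; rewrite mem_index_iota => /andP [hk _]. by rewrite leqNgt hk.
    apply: (@leq_trans (\sum_(1 <= k < T.+1) 1)).
    + by apply: leq_sum => k _; exact: leq_b1.
    + by rewrite sum_nat_const_nat muln1 subn1.
  have Hdbl : \sum_(1 <= k < (n.*2).+1) (n %/ p ^ k).*2 = (\sum_(1 <= k < (n.*2).+1) n %/ p ^ k).*2.
    rewrite -[RHS]mul2n big_distrr /=. apply: eq_bigr => k _. by rewrite mul2n.
  rewrite Hdbl in Hsum. lia.
Qed.

Lemma bin_ge n : 2 ^ n <= 'C(n.*2, n).
Proof.
  elim: n => [|n IH]; first by [].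
  rewrite doubleS binS.
  have E : 'C((n.*2).+1, n.+1) = 'C((n.*2).+1, n).
    have := @bin_sub (n.*2).+1 n. rewrite (_ : (n.*2).+1 - n = n.+1); last by lia.
    apply. lia.
  rewrite E expnS.
  have := @leq_bin2l (n.*2) (n.*2).+1 n (leqnSn _). lia.
Qed.

Lemma C_prod m : 0 < m -> m = \prod_(p <- primes m) p ^ logn p m.
Proof.
  move=> m0. rewrite {1}(prod_prime_decomp m0) prime_decompE big_map. done.
Qed.

Lemma ineq_k k : 6 <= k -> (3 * k + 1) * (2 ^ k + 17) < 2 ^ (3 * k).
Proof.
  elim: k => [|k IH] // hk.
  case: (ltnP k 6) => h6.
  - have -> : k = 5 by lia. by [].
  - have := IH h6. rewrite (_ : 3 * k.+1 = (3 * k).+3); last by lia.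
    rewrite !expnS. lia.
Qed.

Lemma many_primes_mc k : 6 <= k -> exists P : seq nat,
  [/\ size P = 18, uniq P & forall p, p \in P -> [/\ prime p, 2 ^ k < p & p <= 2 ^ (3 * k + 1)]].
Proof.
  move=> hk.
  set n := 2 ^ (3 * k).
  have n0 : 0 < n by rewrite expn_gt0.
  set C := 'C(n.*2, n).
  have C0 : 0 < C by rewrite bin_gt0; lia.
  have Hn2 : n.*2 = 2 ^ (3 * k + 1) by rewrite addn1 expnS mul2n.
  set big := [seq p <- primes C | 2 ^ k < p].
  case: (leqP 18 (size big)) => h.
  - exists (take 18 big). split.
    + by rewrite size_takel.
    + by apply: take_uniq; apply: filter_uniq; apply: primes_uniq.
    + move=> p /mem_take. rewrite mem_filter => /andP [hp]. move=> hpC.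
      have hpC' := hpC. rewrite mem_primes in hpC'. case/and3P: hpC' => pp _ _.
      split => //. rewrite -Hn2.
      have h1 : p <= p ^ logn p C.
        rewrite -{1}(expn1 p). rewrite leq_exp2l ?prime_gt1 //. by rewrite logn_gt0.
      exact: (leq_trans h1 (logn_bin_le _ _ pp n0)).
  - exfalso.
    have H1 : C <= (n.*2) ^ (size (primes C)).
      have E1 : \prod_(p <- primes C) p ^ logn p C <= \prod_(p <- primes C) n.*2.
        rewrite !big_seq. apply: leq_prod => p hp. rewrite mem_primes in hp.
        case/and3P: hp => pp _ _. exact: logn_bin_le _ _ pp n0.
      have E2 : \prod_(p <- primes C) n.*2 = (n.*2) ^ (size (primes C)).
        by rewrite big_const_seq iter_muln_1 count_predT.
      rewrite -E2. apply: (leq_trans _ E1). by rewrite -C_prod.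
    have Hsz : size (primes C) <= 2 ^ k + 17.
      have Hc := count_predC (fun p => 2 ^ k < p) (primes C).
      have Hb : count (fun p => 2 ^ k < p) (primes C) = size big by rewrite size_filter.
      have Hsm : count (predC (fun p => 2 ^ k < p)) (primes C) <= 2 ^ k.
        rewrite -size_filter.
        have -> : 2 ^ k = size (iota 1 (2 ^ k)) by rewrite size_iota.
        apply: uniq_leq_size; first by apply: filter_uniq; apply: primes_uniq.
        move=> x; rewrite mem_filter mem_iota => /andP [hx hxC].
        rewrite mem_primes in hxC. case/and3P: hxC => px _ _.
        have := prime_gt1 px. rewrite /= size_iota in hx. lia.
      lia.
    have H2 : (n.*2) ^ (size (primes C)) <= (n.*2) ^ (2 ^ k + 17).
      apply: leq_pexp2l => //. lia.
    have H3 : (n.*2) ^ (2 ^ k + 17) < 2 ^ n.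
      rewrite Hn2 -expnM ltn_exp2l //. exact: ineq_k.
    have H4 := bin_ge n.
    lia.
Qed.

Lemma in_mem_nat (x : nat) (s : seq nat) : x \in s -> List.In x s.
Proof. elim: s => [|a s IH] //=. rewrite in_cons => /orP [/eqP ->|h]; [left|right; apply: IH]; done. Qed.

Lemma uniq_NoDup_nat (s : seq nat) : uniq s -> List.NoDup s.
Proof.
  elim: s => [|a s IH] /=; first by constructor.
  move=> /andP [ha hs]. constructor; last by apply: IH.
  move=> hin. move/negP: ha; apply. elim: s hin {IH hs} => [|b s IH'] //= [->|h].
  - by rewrite in_cons eqxx.
  - by rewrite in_cons (IH' h) orbT.
Qed.

Lemma size_length_nat (s : seq nat) : size s = List.length s.
Proof. by elim: s => //= a s ->. Qed.

Lemma pow_expn m n : Nat.pow m n = expn m n.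
Proof. elim: n => [|n IH] //=. by rewrite expnS IH. Qed.

Lemma many_primes_export k : (6 <= k)%coq_nat -> exists P : list nat,
  List.length P = 18 /\ List.NoDup P /\ forall p, List.In p P ->
   ((1 < p)%coq_nat /\ forall d c : nat, p = Nat.mul c d -> d = 1 \/ d = p) /\
   (Nat.pow 2 k < p)%coq_nat /\ (p <= Nat.pow 2 (Nat.add (Nat.mul 3 k) 1))%coq_nat.
Proof.
  move/leP=> hk. have [P [hs hu hP]] := many_primes_mc k hk.
  exists P. split; first by rewrite -size_length_nat.
  split; first exact: uniq_NoDup_nat.
  move=> p hin.
  have hin' : p \in P.
    elim: P hin {hs hu hP} => [|a s IH] //= [->|h]; rewrite in_cons ?eqxx //.
    by rewrite IH ?orbT.
  have [pp hlo hhi] := hP p hin'.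
  split; [split|split].
  - apply/ltP. exact: prime_gt1.
  - move=> d c E. case/primeP: pp => _ /(_ d).
    have hd : d %| p by rewrite E multE dvdn_mull.
    move=> /(_ hd) /orP [/eqP ->|/eqP ->]; [left|right]; done.
  - apply/ltP. by rewrite pow_expn.
  - apply/leP. by rewrite pow_expn plusE multE.
Qed.

End MC.

Set Bullet Behavior "Strict Subproofs".
Close Scope Z_scope.
Open Scope R_scope.


Definition indR (P : Prop) : R := if excluded_middle_informative P then 1 else 0.
Definition indb (P : Prop) : bool := if excluded_middle_informative P then true else false.

Lemma ind_01 P : 0 <= indR P <= 1.
Proof. unfold indR; destruct excluded_middle_informative; lra. Qed.

Lemma ind_T (P : Prop) : P -> indR P = 1.
Proof. unfold indR; destruct excluded_middle_informative; tauto. Qed.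
Lemma ind_F (P : Prop) : ~ P -> indR P = 0.
Proof. unfold indR; destruct excluded_middle_informative; tauto. Qed.

Lemma sumR_nil g : sumR nil g = 0.
Proof. reflexivity. Qed.
Lemma sumR_cons a l g : sumR (a :: l) g = g a + sumR l g.
Proof. reflexivity. Qed.

Lemma sumR_app l1 l2 g : sumR (l1 ++ l2) g = sumR l1 g + sumR l2 g.
Proof. induction l1; simpl; [lra|]. rewrite IHl1; lra. Qed.

Lemma sumR_le l g h : (forall x, In x l -> g x <= h x) -> sumR l g <= sumR l h.
Proof.
  induction l; simpl; intros H; [lra|].
  apply Rplus_le_compat; auto.
Qed.

Lemma sumR_ge0 l g : (forall x, In x l -> 0 <= g x) -> 0 <= sumR l g.
Proof.
  intros H. replace 0 with (sumR l (fun _ => 0)).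
  - apply sumR_le; auto.
  - induction l; simpl; auto. rewrite IHl; [lra|]. intros; apply H; simpl; auto.
Qed.

Lemma sumR_scal l c g : sumR l (fun x => c * g x) = c * sumR l g.
Proof. induction l; simpl; [lra|]. rewrite IHl; lra. Qed.

Lemma sumR_plus l g h : sumR l (fun x => g x + h x) = sumR l g + sumR l h.
Proof. induction l; simpl; [lra|]. rewrite IHl; lra. Qed.

Lemma sumR_ext l g h : (forall x, In x l -> g x = h x) -> sumR l g = sumR l h.
Proof. induction l; simpl; intros H; auto. rewrite H, IHl; auto. Qed.

Lemma sumR_const l c : sumR l (fun _ => c) = INR (length l) * c.
Proof. induction l; simpl length; [simpl; lra|]. rewrite S_INR, sumR_cons, IHl; lra. Qed.

Lemma sumR_swap (l1 l2 : list nat) (g : nat -> nat -> R) :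
  sumR l1 (fun x => sumR l2 (fun y => g x y)) = sumR l2 (fun y => sumR l1 (fun x => g x y)).
Proof.
  induction l1; simpl.
  - induction l2; simpl; auto. rewrite <- IHl2; lra.
  - rewrite IHl1. rewrite <- sumR_plus. reflexivity.
Qed.

Lemma sumR_ind_count (l : list nat) (P : nat -> Prop) :
  sumR l (fun x => indR (P x)) = INR (length (filter (fun x => indb (P x)) l)).
Proof.
  induction l; simpl; auto.
  unfold indR at 1, indb at 1; destruct excluded_middle_informative; simpl length;
  rewrite IHl; try rewrite S_INR; lra.
Qed.

Lemma NoDup_map_on (f : nat -> nat) l :
  NoDup l -> (forall x y, In x l -> In y l -> f x = f y -> x = y) -> NoDup (map f l).
Proof.
  induction l; simpl; intros Hn Hi; constructor.
  - inversion Hn; subst. intros Hin. apply in_map_iff in Hin as [y [Hy Hy']].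
    assert (y = a) by (apply Hi; auto). subst; contradiction.
  - inversion Hn; subst. apply IHl; auto.
Qed.

Lemma filter_In_iff (l : list nat) P x : In x (filter (fun x => indb (P x)) l) <-> In x l /\ P x.
Proof.
  rewrite filter_In. unfold indb; destruct excluded_middle_informative; intuition congruence.
Qed.

Lemma count_inj (l : list nat) (P : nat -> Prop) (h : nat -> nat) (T : nat) :
  NoDup l ->
  (forall y, In y l -> P y -> (h y < T)%nat) ->
  (forall y y', In y l -> In y' l -> P y -> P y' -> h y = h y' -> y = y') ->
  sumR l (fun y => indR (P y)) <= INR T.
Proof.
  intros Hn Hb Hi. rewrite sumR_ind_count. apply le_INR.
  set (F := filter _ l).
  assert (HF: NoDup F) by (apply NoDup_filter; auto).
  rewrite <- (length_map h F).
  rewrite <- (length_seq T 0).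
  apply NoDup_incl_length.
  - apply NoDup_map_on; auto. intros x y Hx Hy. unfold F in Hx, Hy.
    apply filter_In_iff in Hx, Hy. apply Hi; tauto.
  - intros z Hz. apply in_map_iff in Hz as [y [<- Hy]]. unfold F in Hy.
    apply filter_In_iff in Hy as [Hy1 Hy2]. apply in_seq. specialize (Hb y Hy1 Hy2). lia.
Qed.

Lemma count_ge (l : list nat) (P : nat -> Prop) (g : nat -> nat) (T : nat) :
  (forall t, (t < T)%nat -> In (g t) l /\ P (g t)) ->
  (forall t t', (t < T)%nat -> (t' < T)%nat -> g t = g t' -> t = t') ->
  INR T <= sumR l (fun y => indR (P y)).
Proof.
  intros Hg Hi. rewrite sumR_ind_count. apply le_INR.
  rewrite <- (length_seq T 0). rewrite <- (length_map g (seq 0 T)).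
  apply NoDup_incl_length.
  - apply NoDup_map_on; [apply seq_NoDup|]. intros x y Hx Hy. apply in_seq in Hx, Hy. apply Hi; lia.
  - intros z Hz. apply in_map_iff in Hz as [t [<- Ht]]. apply in_seq in Ht.
    apply filter_In_iff. apply Hg; lia.
Qed.

Lemma ind_In_NoDup (l : list nat) a :
  NoDup l -> indR (In a l) = sumR l (fun s => indR (a = s)).
Proof.
  induction l; intros Hn; simpl.
  - apply ind_F; auto.
  - inversion Hn; subst.
    destruct (excluded_middle_informative (a = a0)) as [<-|Hne].
    + rewrite ind_T by auto. rewrite ind_T by auto.
      rewrite (sumR_ext _ _ (fun _ => 0)); [rewrite sumR_const; lra|].
      intros x Hx; apply ind_F; intros ->; contradiction.
    + rewrite (ind_F (a = a0)) by auto. rewrite <- IHl by auto.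
      assert (Hiff : (a0 = a \/ In a l) <-> In a l) by (split; [intros [->|]; [congruence|auto]|auto]).
      unfold indR; destruct (excluded_middle_informative (a0 = a \/ In a l));
        destruct (excluded_middle_informative (In a l)); try lra; tauto.
Qed.

Lemma ind_In_le (l : list nat) a :
  indR (In a l) <= sumR l (fun s => indR (a = s)).
Proof.
  induction l; simpl.
  - rewrite ind_F; auto; lra.
  - pose proof (ind_01 (a = a0)).
    assert (0 <= sumR l (fun s => indR (a = s))) by (apply sumR_ge0; intros; apply ind_01).
    unfold indR at 1. destruct excluded_middle_informative as [[->|H1]|H1].
    + rewrite ind_T; auto. lra.
    + rewrite ind_T in IHl; auto. lra.
    + pose proof (ind_01 (In a l)). lra.
Qed.


Definition inS (q : nat) (Sres : list nat) (x : nat) : Prop := In (x mod q) Sres.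

Lemma M_lb (X q : nat) (Sres : list nat) :
  (1 <= q)%nat -> NoDup Sres -> (forall s, In s Sres -> (s < q)%nat) ->
  INR (length Sres) * INR (X / q - 1) <= sumR (seq 1 X) (fun x => indR (inS q Sres x)).
Proof.
  intros Hq Hn Hs.
  rewrite (sumR_ext _ _ (fun x => sumR Sres (fun s => indR (x mod q = s)))).
  2:{ intros x _. unfold inS. apply ind_In_NoDup; auto. }
  rewrite sumR_swap. rewrite <- sumR_const.
  apply sumR_le. intros s Hsin.
  apply (count_ge _ _ (fun t => s + (t + 1) * q)%nat).
  - intros t Ht. specialize (Hs s Hsin).
    pose proof (Nat.Div0.mul_div_le X q).
    split.
    + apply in_seq. nia.
    + rewrite Nat.Div0.mod_add. apply Nat.mod_small; auto.
  - intros t t' _ _ E. nia.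
Qed.

Lemma sq_struct (q : nat) (Sres : list nat) (x y : nat) :
  (1 <= q)%nat ->
  (forall s s', In s Sres -> In s' Sres -> forall m : Z,
      (Z.of_nat q | Z.of_nat s - Z.of_nat s' - m*m)%Z -> s = s' /\ (Z.of_nat q | m)%Z) ->
  inS q Sres x -> inS q Sres y -> is_perfect_square (Z.of_nat x - Z.of_nat y) ->
  (Z.of_nat x - Z.of_nat y =
     (Z.of_nat q * Z.of_nat (Z.to_nat (Z.sqrt (Z.of_nat x - Z.of_nat y) / Z.of_nat q))) *
     (Z.of_nat q * Z.of_nat (Z.to_nat (Z.sqrt (Z.of_nat x - Z.of_nat y) / Z.of_nat q))))%Z.
Proof.
  intros Hq H1 Hx Hy [m Hm].
  destruct (H1 _ _ Hx Hy m) as [_ [c Hc]].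
  - rewrite !Nat2Z.inj_mod.
    pose proof (Z.div_mod (Z.of_nat x) (Z.of_nat q) ltac:(lia)).
    pose proof (Z.div_mod (Z.of_nat y) (Z.of_nat q) ltac:(lia)).
    exists (Z.of_nat y / Z.of_nat q - Z.of_nat x / Z.of_nat q)%Z. lia.
  - rewrite Hm, Hc.
    assert (E : (c * Z.of_nat q * (c * Z.of_nat q) = (Z.of_nat q * Z.abs c) * (Z.of_nat q * Z.abs c))%Z).
    { destruct (Z.abs_eq_or_opp c) as [e|e]; rewrite e; ring. }
    rewrite E, Z.sqrt_square by lia.
    rewrite (Z.mul_comm (Z.of_nat q) (Z.abs c)), Z.div_mul by lia.
    rewrite Z2Nat.id by lia. ring.
Qed.

Lemma pair_bound (X q : nat) (Sres : list nat) (kappa : R) :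
  (1 <= q)%nat -> 0 <= kappa ->
  (forall s s', In s Sres -> In s' Sres -> forall m : Z,
      (Z.of_nat q | Z.of_nat s - Z.of_nat s' - m*m)%Z -> s = s' /\ (Z.of_nat q | m)%Z) ->
  square_pair_sum X (fun x => kappa * indR (inS q Sres x)) <=
    kappa * kappa * INR (Nat.sqrt X / q + 1) * sumR (seq 1 X) (fun x => indR (inS q Sres x)).
Proof.
  intros Hq Hk H1. unfold square_pair_sum.
  rewrite <- sumR_scal. apply sumR_le. intros x Hx. apply in_seq in Hx.
  set (P := fun y => inS q Sres x /\ inS q Sres y /\ is_perfect_square (Z.of_nat x - Z.of_nat y)).
  apply Rle_trans with (sumR (seq 1 X) (fun y => kappa * kappa * indR (inS q Sres x) * indR (P y))).
  { apply sumR_le. intros y Hy.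
    pose proof (ind_01 (inS q Sres x)). pose proof (ind_01 (P y)).
    assert (0 <= kappa * kappa) by nra.
    assert (0 <= kappa * kappa * indR (inS q Sres x) * indR (P y)) by
      (apply Rmult_le_pos; [apply Rmult_le_pos|]; lra).
    cbv beta. destruct (excluded_middle_informative (is_perfect_square _)) as [Hsq|Hsq].
    - destruct (excluded_middle_informative (inS q Sres x)) as [Ix|Ix].
      + destruct (excluded_middle_informative (inS q Sres y)) as [Iy|Iy].
        * rewrite (ind_T (P y)) by (unfold P; repeat split; auto). rewrite !ind_T by auto. lra.
        * rewrite (ind_F (inS q Sres y)) by auto. lra.
      + rewrite (ind_F (inS q Sres x)) by auto. lra.
    - lra. }
  rewrite sumR_scal.
  assert (0 <= kappa * kappa * indR (inS q Sres x)) by (pose proof (ind_01 (inS q Sres x)); nra).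
  apply Rle_trans with (kappa * kappa * indR (inS q Sres x) * INR (Nat.sqrt X / q + 1)); [|right; ring].
  apply Rmult_le_compat_l; auto.
  set (h := fun y : nat => Z.to_nat (Z.sqrt (Z.of_nat x - Z.of_nat y) / Z.of_nat q)).
  apply (count_inj _ _ h).
  - apply seq_NoDup.
  - intros y Hy [Ix [Iy Hs]]. apply in_seq in Hy.
    pose proof (sq_struct q Sres x y Hq H1 Ix Iy Hs) as E. fold (h y) in E.
    assert (Hle : (q * h y * (q * h y) <= X)%nat) by nia.
    apply Nat.sqrt_le_square in Hle.
    assert (h y <= Nat.sqrt X / q)%nat by (apply Nat.div_le_lower_bound; lia).
    lia.
  - intros y y' Hy Hy' [Ix [Iy Hs]] [_ [Iy' Hs']] Eh.
    pose proof (sq_struct q Sres x y Hq H1 Ix Iy Hs) as E.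
    pose proof (sq_struct q Sres x y' Hq H1 Ix Iy' Hs') as E'.
    fold (h y) in E. fold (h y') in E'. rewrite Eh in E. lia.
Qed.


Lemma ap_count (q b : nat) (Sres : list nat) (a d L : nat) :
  (1 <= q)%nat ->
  (forall d : nat, (1 <= d <= b)%nat -> forall z : Z,
      (Z.of_nat q | Z.of_nat d * z)%Z -> (Z.of_nat q | z)%Z) ->
  (1 <= d <= b)%nat ->
  sumR (seq 0 L) (fun j => indR (inS q Sres (a + d * j))) <=
    INR (length Sres) * INR ((L - 1) / q + 1).
Proof.
  intros Hq H2 Hd.
  apply Rle_trans with (sumR (seq 0 L) (fun j => sumR Sres (fun s => indR ((a + d * j) mod q = s)))).
  { apply sumR_le. intros j _. apply ind_In_le. }
  rewrite sumR_swap. rewrite <- sumR_const. apply sumR_le. intros s _.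
  apply (count_inj _ _ (fun j => j / q)%nat).
  - apply seq_NoDup.
  - intros j Hj _. apply in_seq in Hj.
    assert (j / q <= (L - 1) / q)%nat by (apply Nat.Div0.div_le_mono; lia). lia.
  - intros j j' Hj Hj' Ej Ej' Eq.
    pose proof (Nat.div_mod_eq (a + d * j) q) as A1.
    pose proof (Nat.div_mod_eq (a + d * j') q) as A2.
    pose proof (Nat.div_mod_eq j q) as B1.
    pose proof (Nat.div_mod_eq j' q) as B2.
    pose proof (Nat.mod_upper_bound j q ltac:(lia)).
    pose proof (Nat.mod_upper_bound j' q ltac:(lia)).
    assert (Hdiv : (Z.of_nat q | Z.of_nat d * (Z.of_nat j - Z.of_nat j'))%Z).
    { exists (Z.of_nat ((a + d * j) / q) - Z.of_nat ((a + d * j') / q))%Z.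
      rewrite Ej, Ej' in *. nia. }
    destruct (H2 d Hd _ Hdiv) as [c Hc].
    rewrite Eq in B1.
    assert (E : (Z.of_nat j - Z.of_nat j' = Z.of_nat (j mod q) - Z.of_nat (j' mod q))%Z) by lia.
    rewrite Hc in E.
    destruct (Z.lt_trichotomy c 0) as [Hc0|[Hc0|Hc0]]; [nia| |nia].
    subst c. lia.
Qed.


Lemma INR_div_lb (X q : nat) : (1 <= q)%nat -> INR X / INR q - 1 <= INR (X / q).
Proof.
  intros Hq.
  pose proof (Nat.div_mod_eq X q). pose proof (Nat.mod_upper_bound X q ltac:(lia)).
  assert (HX : (X < q * (X / q + 1))%nat) by nia.
  apply lt_INR in HX. rewrite mult_INR, plus_INR in HX. simpl INR in HX.
  assert (0 < INR q) by (apply lt_0_INR; lia).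
  apply Rmult_le_reg_r with (INR q); auto.
  unfold Rdiv. rewrite Rmult_minus_distr_r, Rmult_assoc, Rinv_l by lra. nra.
Qed.

Lemma INR_div_ub (X q : nat) : (1 <= q)%nat -> INR (X / q) <= INR X / INR q.
Proof.
  intros Hq. pose proof (Nat.Div0.mul_div_le X q) as H.
  apply le_INR in H. rewrite mult_INR in H.
  assert (0 < INR q) by (apply lt_0_INR; lia).
  apply Rmult_le_reg_r with (INR q); auto.
  unfold Rdiv. rewrite Rmult_assoc, Rinv_l by lra. lra.
Qed.

Lemma INR_sqrt_le (X : nat) : INR (Nat.sqrt X) <= sqrt (INR X).
Proof.
  pose proof (Nat.sqrt_spec' X) as [H _]. apply le_INR in H. rewrite mult_INR in H.
  rewrite <- (sqrt_square (INR (Nat.sqrt X))) by apply pos_INR.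
  apply sqrt_le_1_alt. lra.
Qed.

Lemma core (X q b : nat) (Sres : list nat) (alpha B : R) :
  (1 <= q)%nat -> NoDup Sres -> (forall s, In s Sres -> (s < q)%nat) ->
  (forall s s', In s Sres -> In s' Sres -> forall m : Z,
      (Z.of_nat q | Z.of_nat s - Z.of_nat s' - m*m)%Z -> s = s' /\ (Z.of_nat q | m)%Z) ->
  (forall d : nat, (1 <= d <= b)%nat -> forall z : Z,
      (Z.of_nat q | Z.of_nat d * z)%Z -> (Z.of_nat q | z)%Z) ->
  0 < alpha -> alpha * INR q <= 1 -> 1 <= B -> B <= INR b ->
  400 <= INR (length Sres) ->
  4 * INR q <= INR X -> INR q <= sqrt (INR X) -> INR q * B + 4 * INR q < INR X ->
  B * B < INR X ->
  exists f : nat -> R,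
      (forall x, (1 <= x <= X)%nat -> 0 <= f x <= 1) /\
      avg_interval X f = alpha /\
      square_pair_sum X f <= / 100 * alpha ^ 2 * (INR X * sqrt (INR X)) /\
      (forall a d L : nat, is_subAP X a d L -> avg_AP a d L f >= 2 * alpha ->
         INR L < INR X / B).
Proof.
  intros Hq Hnd Hlt H1 H2 Ha Haq HB1 HBb HN HXq HqX HqB HBX.
  set (M := sumR (seq 1 X) (fun x => indR (inS q Sres x))).
  set (N := INR (length Sres)) in *.
  set (Qr := INR q) in *. set (Xr := INR X) in *.
  assert (HQ : 1 <= Qr) by (unfold Qr; apply (le_INR 1); lia).
  assert (HX0 : 0 < Xr) by lra.
  assert (Hsq0 : 0 < sqrt Xr) by (apply sqrt_lt_R0; lra).
  assert (Hsq : sqrt Xr * sqrt Xr = Xr) by (apply sqrt_sqrt; lra).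
  assert (HM : N * (Xr / Qr - 2) <= M).
  { pose proof (M_lb X q Sres Hq Hnd Hlt) as H. fold M in H. fold N in H.
    assert (Xr / Qr - 2 <= INR (X / q - 1)).
    { assert (1 <= X / q)%nat.
      { apply Nat.div_le_lower_bound; [lia|].
        assert (INR (q * 1) <= INR X) by (rewrite mult_INR; simpl; fold Qr Xr; lra).
        apply INR_le; auto. }
      rewrite minus_INR by auto. pose proof (INR_div_lb X q Hq) as Hdl. simpl INR. fold Xr Qr in Hdl. lra. }
    assert (0 <= N) by lra. nra. }
  assert (Ht : 4 <= Xr / Qr).
  { apply Rmult_le_reg_r with Qr; [lra|]. unfold Rdiv. rewrite Rmult_assoc, Rinv_l by lra. lra. }
  assert (HM2 : N * Xr / (2 * Qr) <= M).
  { apply Rle_trans with (N * (Xr / Qr - 2)); auto.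
    assert (Xr / (2 * Qr) = (Xr / Qr) / 2) by (field; lra).
    unfold Rdiv in *. rewrite Rmult_assoc. rewrite H. nra. }
  assert (HMpos : 0 < M).
  { apply Rlt_le_trans with (N * Xr / (2 * Qr)); auto.
    apply Rdiv_lt_0_compat; nra. }
  set (kappa := alpha * Xr / M).
  assert (Hk0 : 0 <= kappa) by (unfold kappa; apply Rlt_le, Rdiv_lt_0_compat; nra).
  assert (Hk1 : kappa <= 1).
  { unfold kappa. apply Rmult_le_reg_r with M; auto.
    unfold Rdiv. rewrite Rmult_assoc, Rinv_l, Rmult_1_r, Rmult_1_l by lra.
    apply Rle_trans with (N * Xr / (2 * Qr)); auto.
    assert (E : N * Xr / (2 * Qr) - alpha * Xr = Xr * (N - 2 * (alpha * Qr)) / (2 * Qr)) by (field; lra).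
    assert (0 <= Xr * (N - 2 * (alpha * Qr)) / (2 * Qr)).
    { apply Rmult_le_pos; [nra|]. apply Rlt_le, Rinv_0_lt_compat; lra. }
    lra. }
  exists (fun x => kappa * indR (inS q Sres x)).
  split; [|split; [|split]].
  - intros x _. pose proof (ind_01 (inS q Sres x)) as Hi.
    split; [apply Rmult_le_pos; lra|]. nra.
  - unfold avg_interval. rewrite sumR_scal. fold M. unfold kappa. fold Xr. field. lra.
  - eapply Rle_trans; [apply pair_bound; auto|]. fold M.
    assert (HT : INR (Nat.sqrt X / q + 1) <= sqrt Xr / Qr + 1).
    { rewrite plus_INR. simpl INR.
      pose proof (INR_div_ub (Nat.sqrt X) q Hq) as Hd1. pose proof (INR_sqrt_le X) as Hd2.
      fold Qr Xr in Hd1, Hd2. assert (INR (Nat.sqrt X) / Qr <= sqrt Xr / Qr).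
      { unfold Rdiv. apply Rmult_le_compat_r; auto. apply Rlt_le, Rinv_0_lt_compat; lra. }
      lra. }
    assert (E : kappa * kappa * M = alpha * alpha * Xr * Xr / M) by (unfold kappa; field; lra).
    apply Rle_trans with (kappa * kappa * M * (sqrt Xr / Qr + 1)).
    { rewrite (Rmult_comm (kappa * kappa * INR _)), <- Rmult_assoc, (Rmult_comm M).
      apply Rmult_le_compat_l; auto. apply Rmult_le_pos; [apply Rmult_le_pos|]; lra. }
    rewrite E.
    assert (HinvM : / M <= 2 * Qr / (N * Xr)).
    { replace (2 * Qr / (N * Xr)) with (/ (N * Xr / (2 * Qr))) by (field; split; lra).
      apply Rinv_le_contravar; auto. apply Rdiv_lt_0_compat; nra. }
    assert (Hs : sqrt Xr / Qr + 1 <= 2 * sqrt Xr / Qr).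
    { apply Rmult_le_reg_r with Qr; [lra|]. unfold Rdiv.
      rewrite Rmult_plus_distr_r, !Rmult_assoc, Rinv_l by lra. lra. }
    apply Rle_trans with (alpha * alpha * Xr * Xr * (2 * Qr / (N * Xr)) * (2 * sqrt Xr / Qr)).
    { unfold Rdiv at 1. apply Rmult_le_compat.
      - apply Rmult_le_pos; [nra|]. apply Rlt_le, Rinv_0_lt_compat; auto.
      - apply Rplus_le_le_0_compat; [|lra]. apply Rlt_le, Rdiv_lt_0_compat; lra.
      - apply Rmult_le_compat_l; [nra|auto].
      - exact Hs. }
    replace (alpha * alpha * Xr * Xr * (2 * Qr / (N * Xr)) * (2 * sqrt Xr / Qr))
      with (4 / N * (alpha ^ 2 * (Xr * sqrt Xr))) by (field; split; lra).
    apply Rle_trans with (/ 100 * (alpha ^ 2 * (Xr * sqrt Xr))); [|right; ring].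
    apply Rmult_le_compat_r; [apply Rmult_le_pos; nra|].
    apply Rmult_le_reg_r with N; [lra|]. unfold Rdiv. rewrite Rmult_assoc, Rinv_l by lra. lra.
  - intros a d L [Ha1 [Hd1 [HL1 HaX]]] Havg.
    destruct (Rlt_or_le (INR L) (Xr / B)) as [Hlt'|Hge]; auto.
    exfalso.
    assert (HB0 : 0 < B) by lra.
    assert (HL : 0 < INR L) by (apply lt_0_INR; lia).
    destruct (le_lt_dec d b) as [Hdb|Hdb].
    +
      pose proof (ap_count q b Sres a d L Hq H2 (conj Hd1 Hdb)) as Hc. fold N in Hc.
      unfold avg_AP in Havg. rewrite sumR_scal in Havg.
      set (cnt := sumR (seq 0 L) (fun j => indR (inS q Sres (a + d * j)))) in *.
      assert (HT : INR ((L - 1) / q + 1) <= INR L / Qr + 1).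
      { rewrite plus_INR. simpl INR. pose proof (INR_div_ub (L - 1) q Hq) as H. fold Qr in H.
        rewrite minus_INR in H by lia. simpl INR in H.
        assert ((INR L - 1) / Qr <= INR L / Qr).
        { unfold Rdiv. apply Rmult_le_compat_r; [apply Rlt_le, Rinv_0_lt_compat; lra|lra]. }
        lra. }
      assert (Hcnt : cnt <= N * (INR L / Qr + 1)).
      { eapply Rle_trans; [apply Hc|]. apply Rmult_le_compat_l; lra. }
      assert (H3 : 2 * alpha * INR L <= kappa * cnt).
      { apply Rge_le in Havg. apply Rmult_le_compat_r with (r := INR L) in Havg; [|lra].
        replace (kappa * cnt / INR L * INR L) with (kappa * cnt) in Havg by (field; lra). lra. }
      assert (Hpos : 0 < N * (Xr / Qr - 2)) by nra.
      assert (HinvM : / M <= / (N * (Xr / Qr - 2))) by (apply Rinv_le_contravar; auto).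
      assert (H4 : kappa * cnt <= alpha * Xr * / (N * (Xr / Qr - 2)) * (N * (INR L / Qr + 1))).
      { unfold kappa, Rdiv. apply Rmult_le_compat.
        - apply Rmult_le_pos; [nra|]. apply Rlt_le, Rinv_0_lt_compat; auto.
        - unfold cnt; apply sumR_ge0; intros; apply ind_01.
        - apply Rmult_le_compat_l; [nra|]. exact HinvM.
        - exact Hcnt. }
      replace (alpha * Xr * / (N * (Xr / Qr - 2)) * (N * (INR L / Qr + 1)))
        with (alpha * Xr * (INR L + Qr) / (Xr - 2 * Qr)) in H4 by (field; repeat split; lra).
      assert (H6 : 2 * INR L * (Xr - 2 * Qr) <= Xr * (INR L + Qr)).
      { assert (Hx2 : 0 < Xr - 2 * Qr) by lra.
        assert (2 * alpha * INR L <= alpha * Xr * (INR L + Qr) / (Xr - 2 * Qr)) by lra.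
        apply Rmult_le_compat_r with (r := Xr - 2 * Qr) in H; [|lra].
        replace (alpha * Xr * (INR L + Qr) / (Xr - 2 * Qr) * (Xr - 2 * Qr)) with
          (alpha * (Xr * (INR L + Qr))) in H by (field; lra).
        apply Rmult_le_reg_l with alpha; auto. lra. }
      assert (H7 : Xr <= INR L * B).
      { apply Rmult_le_compat_r with (r := B) in Hge; [|lra].
        replace (Xr / B * B) with Xr in Hge by (field; lra). lra. }
      nra.
    +
      assert (Hdb' : B + 1 <= INR d).
      { assert (INR (b + 1) <= INR d) by (apply le_INR; lia). rewrite plus_INR in H. simpl in H. lra. }
      assert (HdL : INR d * (INR L - 1) <= Xr - 1).
      { assert (Hn : (d * (L - 1) <= X - 1)%nat) by lia.
        apply le_INR in Hn. assert ((1 <= X)%nat) by nia. rewrite mult_INR, (minus_INR L 1), (minus_INR X 1) in Hn by lia. simpl INR in Hn. fold Xr in Hn. lra. }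
      assert (H7 : Xr <= INR L * B).
      { apply Rmult_le_compat_r with (r := B) in Hge; [|lra].
        replace (Xr / B * B) with Xr in Hge by (field; lra). lra. }
      assert (HL1' : 1 <= INR L) by (apply (le_INR 1); lia).
      assert (E1 : (B + 1) * (INR L - 1) <= INR d * (INR L - 1)) by (apply Rmult_le_compat_r; lra).
      assert (E2 : INR L <= B) by nra.
      assert (E3 : INR L * B <= B * B) by nra.
      lra.
Qed.

Open Scope Z_scope.


Definition prodZ (P : list nat) : Z := fold_right (fun p acc => Z.of_nat p * acc) 1 P.

Lemma prodZ_pos P : (forall p, In p P -> 1 <= Z.of_nat p) -> 0 < prodZ P.
Proof. induction P; simpl; intros H; [lia|]. pose proof (H a (or_introl eq_refl)). specialize (IHP (fun p Hp => H p (or_intror Hp))). nia. Qed.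

Lemma prime_div_prod p P :
  prime p -> (forall x, In x P -> prime (Z.of_nat x)) -> (p | prodZ P) ->
  exists x, In x P /\ p = Z.of_nat x.
Proof.
  intros Hp. induction P as [|a P IH]; simpl; intros HP Hd.
  - apply prime_ge_2 in Hp. apply Z.divide_pos_le in Hd; lia.
  - destruct (prime_mult p Hp _ _ Hd) as [Ha|Ha].
    + exists a. split; auto. apply prime_div_prime; auto.
    + destruct IH as [x [Hx Ex]]; auto. exists x; auto.
Qed.

Lemma prod_divide P z :
  NoDup P -> (forall x, In x P -> prime (Z.of_nat x)) ->
  (forall x, In x P -> (Z.of_nat x | z)) -> (prodZ P | z).
Proof.
  induction P as [|a P IH]; simpl; intros Hn HP Hd.
  - apply Z.divide_1_l.
  - inversion Hn; subst.
    destruct IH as [c Hc]; auto.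
    assert (Hnd : ~ (Z.of_nat a | prodZ P)).
    { intros H. destruct (prime_div_prod _ P (HP a (or_introl eq_refl))) as [x [Hx Ex]]; auto.
      apply Nat2Z.inj in Ex. subst; contradiction. }
    assert (Hac : (Z.of_nat a | c)).
    { apply Gauss with (prodZ P).
      - rewrite Z.mul_comm, <- Hc. auto.
      - apply prime_rel_prime; auto. }
    destruct Hac as [e He]. exists e. rewrite Hc, He. ring.
Qed.

Lemma NoDup_map_inj {A B} (f : A -> B) l x y :
  NoDup (map f l) -> In x l -> In y l -> f x = f y -> x = y.
Proof.
  induction l; simpl; intros Hn Hx Hy E; [contradiction|].
  inversion Hn; subst.
  destruct Hx as [->|Hx], Hy as [->|Hy]; auto.
  - exfalso. apply H1. rewrite E. apply in_map; auto.
  - exfalso. apply H1. rewrite <- E. apply in_map; auto.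
Qed.

Lemma nonsq_nat (p : nat) : (3 <= p)%nat -> exists r, (r < p)%nat /\ forall m, (m < p)%nat -> ((m * m) mod p <> r)%nat.
Proof.
  intros Hp.
  destruct (Classical_Prop.classic (exists r, (r < p)%nat /\ forall m, (m < p)%nat -> ((m * m) mod p <> r)%nat)) as [H|H]; auto.
  exfalso.
  set (sq := fun m => ((m * m) mod p)%nat).
  assert (Hinc : incl (seq 0 p) (map sq (seq 0 p))).
  { intros r Hr. apply in_seq in Hr.
    destruct (Classical_Prop.classic (exists m, (m < p)%nat /\ sq m = r)) as [[m [Hm Em]]|Hno].
    - rewrite <- Em. apply in_map, in_seq. lia.
    - exfalso. apply H. exists r. split; [lia|]. intros m Hm E. apply Hno. exists m; auto. }
  assert (Hnd : NoDup (map sq (seq 0 p))).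
  { eapply NoDup_incl_NoDup; [apply seq_NoDup| |exact Hinc]. rewrite length_map; lia. }
  assert (E : sq 1%nat = sq (p - 1)%nat).
  { unfold sq. rewrite Nat.mul_1_l.
    replace ((p - 1) * (p - 1))%nat with (1 + (p - 2) * p)%nat by nia.
    rewrite Nat.Div0.mod_add. reflexivity. }
  pose proof (NoDup_map_inj sq _ 1%nat (p - 1)%nat Hnd ltac:(apply in_seq; lia) ltac:(apply in_seq; lia) E).
  lia.
Qed.

Lemma nonsq_exists (p : Z) (Q : Z) :
  prime p -> 3 <= p -> ~ (p | Q) -> exists t, forall m, ~ (p | t * Q - m * m).
Proof.
  intros Hp Hp3 HQ.
  destruct (nonsq_nat (Z.to_nat p) ltac:(lia)) as [r [Hr Hnr]].
  destruct (rel_prime_bezout _ _ (rel_prime_sym _ _ (prime_rel_prime _ Hp _ HQ))) as [u w Huw].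
  exists (Z.of_nat r * u). intros m [k Hk].
  apply (Hnr (Z.to_nat (m mod p))).
  - pose proof (Z.mod_pos_bound m p ltac:(lia)). lia.
  - apply Nat2Z.inj. rewrite Nat2Z.inj_mod, Nat2Z.inj_mul, Z2Nat.id, Z2Nat.id by
      (try (pose proof (Z.mod_pos_bound m p ltac:(lia))); lia).
    rewrite <- Z.mul_mod by lia.
    (* m*m = r*u*Q - k p = r (1 - w p) - k p *)
    assert (E : m * m = Z.of_nat r + (- (Z.of_nat r) * w - k) * p) by nia.
    rewrite E, Z.mod_add by lia. apply Z.mod_small. lia.
Qed.


Lemma not_div_prod a P :
  prime (Z.of_nat a) -> ~ In a P -> (forall x, In x P -> prime (Z.of_nat x)) -> ~ (Z.of_nat a | prodZ P).
Proof.
  intros Ha Hn HP Hd. destruct (prime_div_prod _ P Ha HP Hd) as [x [Hx Ex]].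
  apply Nat2Z.inj in Ex; subst; contradiction.
Qed.

Lemma build (n : nat) : forall Pl : list nat, length Pl = (2 * n)%nat -> NoDup Pl ->
  (forall p, In p Pl -> prime (Z.of_nat p) /\ (3 <= p)%nat) ->
  exists S : list Z, length S = (2 ^ n)%nat /\ NoDup S /\
    forall s s', In s S -> In s' S -> forall m, (prodZ Pl | s - s' - m * m) -> s = s'.
Proof.
  induction n as [|n IH]; intros Pl Hlen Hnd HP.
  - destruct Pl; [|simpl in Hlen; lia].
    exists (0 :: nil). split; [reflexivity|]. split; [repeat constructor; simpl; tauto|].
    intros s s' [<-|[]] [<-|[]]; auto.
  - destruct Pl as [|a [|b Pl']]; simpl in Hlen; try lia.
    inversion Hnd as [|? ? Ha Hnd1]; subst. inversion Hnd1 as [|? ? Hb Hnd2]; subst.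
    destruct (IH Pl' ltac:(lia) Hnd2 (fun p Hp => HP p (or_intror (or_intror Hp)))) as [S' [HlS [HnS HpS]]].
    destruct (HP a (or_introl eq_refl)) as [Pa Ha3].
    destruct (HP b (or_intror (or_introl eq_refl))) as [Pb Hb3].
    assert (HPl' : forall x, In x Pl' -> prime (Z.of_nat x)) by (intros x Hx; apply HP; simpl; auto).
    set (q' := prodZ Pl').
    assert (Hab : a <> b) by (intros ->; apply Ha; simpl; auto).
    assert (Haq : ~ (Z.of_nat a | q')) by (apply not_div_prod; auto; intros Hin; apply Ha; simpl; auto).
    assert (Hbq : ~ (Z.of_nat b | q')) by (apply not_div_prod; auto).
    assert (Hab' : ~ (Z.of_nat a | Z.of_nat b)).
    { intros H. apply prime_div_prime in H; auto. apply Nat2Z.inj in H. auto. }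
    assert (Hba' : ~ (Z.of_nat b | Z.of_nat a)).
    { intros H. apply prime_div_prime in H; auto. apply Nat2Z.inj in H. auto. }
    assert (Ha1 : ~ (Z.of_nat a | - (q' * Z.of_nat b))).
    { intros H. apply (proj1 (Z.divide_opp_r _ _)) in H. destruct (prime_mult _ Pa _ _ H); auto. }
    assert (Hb1 : ~ (Z.of_nat b | - (q' * Z.of_nat a))).
    { intros H. apply (proj1 (Z.divide_opp_r _ _)) in H. destruct (prime_mult _ Pb _ _ H); auto. }
    destruct (nonsq_exists _ _ Pa ltac:(lia) Ha1) as [v Hv].
    destruct (nonsq_exists _ _ Pb ltac:(lia) Hb1) as [u Hu].
    set (c0 := q' * Z.of_nat a * u). set (c1 := q' * Z.of_nat b * v).
    exists (map (fun s => s + c0) S' ++ map (fun s => s + c1) S').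
    assert (Hq'd : forall z, (prodZ (a :: b :: Pl') | z) -> (q' | z)).
    { intros z [k Hk]. exists (k * Z.of_nat a * Z.of_nat b). rewrite Hk. simpl. fold q'. ring. }
    assert (Had : forall z, (prodZ (a :: b :: Pl') | z) -> (Z.of_nat a | z)).
    { intros z [k Hk]. exists (k * Z.of_nat b * q'). rewrite Hk. simpl. fold q'. ring. }
    assert (Hbd : forall z, (prodZ (a :: b :: Pl') | z) -> (Z.of_nat b | z)).
    { intros z [k Hk]. exists (k * Z.of_nat a * q'). rewrite Hk. simpl. fold q'. ring. }
    assert (Hcd : forall z, (q' | z) -> (q' | c0 - c1 + z)).
    { intros z Hz. apply Z.divide_add_r; auto. unfold c0, c1.
      exists (Z.of_nat a * u - Z.of_nat b * v). ring. }
    assert (Hcd' : forall z, (q' | z) -> (q' | c1 - c0 + z)).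
    { intros z Hz. apply Z.divide_add_r; auto. unfold c0, c1.
      exists (Z.of_nat b * v - Z.of_nat a * u). ring. }
    split; [|split].
    * rewrite length_app, !length_map, HlS. simpl. rewrite Nat.add_0_r. reflexivity.
    * apply NoDup_app.
      ++ apply Injective_map_NoDup; auto. intros x y E; lia.
      ++ apply Injective_map_NoDup; auto. intros x y E; lia.
      ++ intros y Hy1 Hy2. apply in_map_iff in Hy1 as [s [E1 Hs]]. apply in_map_iff in Hy2 as [s' [E2 Hs']].
        assert (s = s').
        { apply (HpS s s' Hs Hs' 0). fold q'. exists (Z.of_nat b * v - Z.of_nat a * u). unfold c0, c1 in *. nia. }
        subst s'. assert (Ec : c0 = c1) by lia.
        apply (Hv 0). replace (v * - (q' * Z.of_nat b) - 0 * 0) with ((c0 - c1) - Z.of_nat a * (q' * u)) by (unfold c0, c1; ring).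
        rewrite Ec, Z.sub_diag. apply Z.divide_sub_r; [apply Z.divide_0_r|apply Z.divide_factor_l].
    * intros x1 x2 Hx1 Hx2 m Hd.
      apply in_app_or in Hx1, Hx2.
      destruct Hx1 as [Hx1|Hx1]; apply in_map_iff in Hx1 as [s [<- Hs]];
      destruct Hx2 as [Hx2|Hx2]; apply in_map_iff in Hx2 as [s' [<- Hs']].
      ++ f_equal. apply (HpS s s' Hs Hs' m). fold q'.
        replace (s - s' - m * m) with (s + c0 - (s' + c0) - m * m) by ring. auto.
      ++ assert (s = s').
        { apply (HpS s s' Hs Hs' m). fold q'.
          replace (s - s' - m * m) with (c1 - c0 + (s + c0 - (s' + c1) - m * m)) by ring. auto. }
        subst s'. exfalso. apply (Hv m).
        replace (v * - (q' * Z.of_nat b) - m * m) with ((s + c0 - (s + c1) - m * m) - Z.of_nat a * (q' * u)) by (unfold c0, c1; ring).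
        apply Z.divide_sub_r; [auto|apply Z.divide_factor_l].
      ++ assert (s = s').
        { apply (HpS s s' Hs Hs' m). fold q'.
          replace (s - s' - m * m) with (c0 - c1 + (s + c1 - (s' + c0) - m * m)) by ring. auto. }
        subst s'. exfalso. apply (Hu m).
        replace (u * - (q' * Z.of_nat a) - m * m) with ((s + c1 - (s + c0) - m * m) - Z.of_nat b * (q' * v)) by (unfold c0, c1; ring).
        apply Z.divide_sub_r; [auto|apply Z.divide_factor_l].
      ++ f_equal. apply (HpS s s' Hs Hs' m). fold q'.
        replace (s - s' - m * m) with (s + c1 - (s' + c1) - m * m) by ring. auto.
Qed.


Lemma prodZ_nat P : Z.of_nat (fold_right Nat.mul 1%nat P) = prodZ P.
Proof. induction P; simpl; auto. rewrite Nat2Z.inj_mul, IHP. reflexivity. Qed.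

Lemma NoDup_map_on_gen {A B} (f : A -> B) l :
  NoDup l -> (forall x y, In x l -> In y l -> f x = f y -> x = y) -> NoDup (map f l).
Proof.
  induction l; simpl; intros Hn Hi; constructor.
  - inversion Hn; subst. intros Hin. apply in_map_iff in Hin as [y [Hy Hy']].
    assert (y = a) by (apply Hi; auto). subst; contradiction.
  - inversion Hn; subst. apply IHl; auto.
Qed.

Lemma NT_final (b : nat) (P : list nat) :
  (2 <= b)%nat -> length P = 18%nat -> NoDup P ->
  (forall p, In p P -> prime (Z.of_nat p) /\ (b < p)%nat) ->
  exists Sres : list nat,
    NoDup Sres /\ length Sres = 512%nat /\
    (forall s, In s Sres -> (s < fold_right Nat.mul 1%nat P)%nat) /\
    (forall s s', In s Sres -> In s' Sres -> forall m : Z,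
      (Z.of_nat (fold_right Nat.mul 1%nat P) | Z.of_nat s - Z.of_nat s' - m*m)%Z ->
      s = s' /\ (Z.of_nat (fold_right Nat.mul 1%nat P) | m)%Z) /\
    (forall d : nat, (1 <= d <= b)%nat -> forall z : Z,
      (Z.of_nat (fold_right Nat.mul 1%nat P) | Z.of_nat d * z)%Z ->
      (Z.of_nat (fold_right Nat.mul 1%nat P) | z)%Z) /\
    (1 <= fold_right Nat.mul 1%nat P)%nat.
Proof.
  intros Hb Hlen Hnd HP.
  set (qn := fold_right Nat.mul 1%nat P).
  assert (Hq : Z.of_nat qn = prodZ P) by apply prodZ_nat.
  assert (HPp : forall x, In x P -> prime (Z.of_nat x)) by (intros x Hx; apply HP; auto).
  assert (Hqpos : 0 < prodZ P).
  { apply prodZ_pos. intros p Hp. destruct (HP p Hp). lia. }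
  destruct (build 9 P ltac:(lia) Hnd ltac:(intros p Hp; destruct (HP p Hp); split; auto; lia))
    as [S [HlS [HnS HpS]]].
  rewrite <- Hq in HpS, Hqpos.
  set (Q := Z.of_nat qn) in *.
  assert (Hmod : forall s, Z.of_nat (Z.to_nat (s mod Q)) = s mod Q).
  { intros s. apply Z2Nat.id. apply Z.mod_pos_bound; lia. }
  assert (Hcong : forall s, (Q | s - s mod Q)).
  { intros s. exists (s / Q). pose proof (Z.div_mod s Q ltac:(lia)). lia. }
  assert (Hall : forall z, (forall x, In x P -> (Z.of_nat x | z)) -> (Q | z)).
  { intros z Hz. rewrite Hq. apply prod_divide; auto. }
  assert (HdivP : forall x z, In x P -> (Q | z) -> (Z.of_nat x | z)).
  { intros x z Hx Hz. eapply Z.divide_trans; [|exact Hz]. rewrite Hq.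
    clear -Hx. induction P as [|a P IH]; simpl in *; [contradiction|].
    destruct Hx as [->|Hx]; [apply Z.divide_factor_l|].
    apply Z.divide_mul_r. auto. }
  exists (map (fun s => Z.to_nat (s mod Q)) S).
  split; [|split; [|split; [|split; [|split]]]].
  - apply NoDup_map_on_gen; auto. intros x y Hx Hy E.
    apply (HpS x y Hx Hy 0).
    assert (E' : x mod Q = y mod Q) by (rewrite <- (Hmod x), <- (Hmod y), E; reflexivity).
    replace (x - y - 0 * 0) with ((x - x mod Q) - (y - y mod Q)) by lia.
    apply Z.divide_sub_r; auto.
  - rewrite length_map, HlS. reflexivity.
  - intros s Hs. apply in_map_iff in Hs as [s0 [<- Hs0]].
    apply Nat2Z.inj_lt. rewrite Hmod. apply Z.mod_pos_bound. lia.
  - intros s1 s2 Hs1 Hs2 m Hd.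
    apply in_map_iff in Hs1 as [s [<- Hs]]. apply in_map_iff in Hs2 as [s' [<- Hs']].
    rewrite !Hmod in Hd.
    assert (s = s').
    { apply (HpS s s' Hs Hs' m).
      replace (s - s' - m * m) with ((s mod Q - s' mod Q - m * m) + (s - s mod Q) - (s' - s' mod Q)) by ring.
      apply Z.divide_sub_r; [apply Z.divide_add_r|]; auto. }
    subst s'. split; auto.
    apply Hall. intros x Hx.
    assert (Hm2 : (Z.of_nat x | m * m)).
    { pose proof (HdivP x _ Hx Hd) as Hd'. apply (proj1 (Z.divide_opp_r _ _)).
      replace (- (m * m)) with (s mod Q - s mod Q - m * m) by ring. auto. }
    destruct (prime_mult _ (HPp x Hx) _ _ Hm2); auto.
  - intros d Hd z Hz. apply Hall. intros x Hx.
    destruct (prime_mult _ (HPp x Hx) _ _ (HdivP x _ Hx Hz)) as [H|H]; auto.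
    exfalso. apply Z.divide_pos_le in H; [|lia]. destruct (HP x Hx). lia.
  - apply Nat2Z.inj_le. fold Q. simpl. lia.
Qed.

Close Scope Z_scope.
Open Scope R_scope.


Lemma exp_le_mono x y : x <= y -> exp x <= exp y.
Proof. intros [H|H]; [left; apply exp_increasing; auto|right; subst; auto]. Qed.

Lemma ln_le_mono x y : 0 < x -> x <= y -> ln x <= ln y.
Proof. intros Hx [H|H]; [left; apply ln_increasing; auto|right; subst; auto]. Qed.

Lemma exist_nat_ge (r : R) : exists n : nat, r <= INR n.
Proof.
  destruct (archimed r) as [H1 _].
  destruct (Z_le_gt_dec 0 (up r)) as [Hz|Hz].
  - exists (Z.to_nat (up r)). rewrite INR_IZR_INZ, Z2Nat.id by lia. lra.
  - exists 0%nat. simpl. assert (IZR (up r) <= 0) by (apply IZR_le; lia). lra.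
Qed.

Lemma INR_le_pow2 n : INR n <= 2 ^ n.
Proof.
  induction n; [simpl; lra|]. rewrite S_INR. simpl pow.
  assert (1 <= 2 ^ n) by (apply pow_R1_Rle; lra). lra.
Qed.

Lemma pow2_choose (B : R) : 1 <= B -> exists k : nat, B <= 2 ^ k /\ 2 ^ k <= 2 * B.
Proof.
  intros HB. destruct (exist_nat_ge B) as [n Hn].
  assert (H : B <= 2 ^ n) by (pose proof (INR_le_pow2 n); lra).
  clear Hn. revert H. induction n as [|n IH]; intros H.
  - exists 0%nat. simpl in *. lra.
  - destruct (Rle_or_lt B (2 ^ n)) as [Hb|Hb]; auto.
    exists (S n). simpl in *. lra.
Qed.

Lemma cube_root (L : R) : 0 < L -> 0 < Rpower L (1/3) /\ Rpower L (1/3) ^ 3 = L.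
Proof.
  intros HL. split.
  - unfold Rpower. apply exp_pos.
  - rewrite <- Rpower_pow by (unfold Rpower; apply exp_pos).
    rewrite Rpower_mult. simpl INR. replace (1/3 * (1 + 1 + 1)) with 1 by field.
    apply Rpower_1; auto.
Qed.

Lemma Rpower_34 (lx : R) : 256 <= lx -> Rpower lx (3/4) <= lx / 4.
Proof.
  intros H.
  assert (Hy : Rpower lx (3/4) * Rpower lx (1/4) = lx).
  { rewrite <- Rpower_plus. replace (3/4 + 1/4) with 1 by field. apply Rpower_1; lra. }
  assert (Hy4 : Rpower lx (1/4) ^ 4 = lx).
  { rewrite <- Rpower_pow by (unfold Rpower; apply exp_pos).
    rewrite Rpower_mult. simpl INR. replace (1/4 * (1 + 1 + 1 + 1)) with 1 by field.
    apply Rpower_1; lra. }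
  assert (Hp : 0 < Rpower lx (1/4)) by (unfold Rpower; apply exp_pos).
  assert (Hp2 : 0 < Rpower lx (3/4)) by (unfold Rpower; apply exp_pos).
  assert (H4 : 4 <= Rpower lx (1/4)).
  { destruct (Rle_or_lt 4 (Rpower lx (1/4))) as [h|h]; auto.
    exfalso. set (y := Rpower lx (1/4)) in *.
    assert (y * y < 16) by nra. assert (y * y * (y * y) < 256) by nra.
    simpl in Hy4. nra. }
  set (y := Rpower lx (1/4)) in *. set (z := Rpower lx (3/4)) in *.
  apply Rmult_le_reg_r with 4; [lra|]. unfold Rdiv. rewrite Rmult_assoc, Rinv_l, Rmult_1_r by lra.
  nra.
Qed.

Lemma exp10_gt : 64 < exp 10.
Proof.
  assert (H : 1 + 5/2 < exp (5/2)) by (apply exp_ineq1; lra).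
  replace 10 with (5/2 + 5/2 + 5/2 + 5/2) by field.
  rewrite !exp_plus. set (e := exp (5/2)) in *.
  assert (He : 49/4 < e * e) by nra.
  assert (64 < (e * e) * (e * e)) by nra. nra.
Qed.

Lemma exp1_gt2 : 2 < exp 1.
Proof. pose proof (exp_ineq1 1 ltac:(lra)). lra. Qed.


Lemma prime_bridge (p : nat) : (1 < p)%nat ->
  (forall d c : nat, p = (c * d)%nat -> d = 1%nat \/ d = p) -> prime (Z.of_nat p).
Proof.
  intros H1 H2. apply prime_alt. split; [lia|].
  intros n Hn [c Hc].
  assert (Hc0 : (0 < c)%Z) by nia.
  destruct (H2 (Z.to_nat n) (Z.to_nat c)) as [E|E]; [|lia|lia].
  apply Nat2Z.inj. rewrite Nat2Z.inj_mul, !Z2Nat.id by lia. lia.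
Qed.

Lemma prod_le (P : list nat) (c : nat) :
  (forall p, In p P -> (p <= c)%nat) -> (fold_right Nat.mul 1%nat P <= c ^ length P)%nat.
Proof.
  induction P as [|a P IH]; simpl; intros H; [lia|].
  apply Nat.mul_le_mono; auto.
Qed.

Lemma exp_pow_n x n : exp x ^ n = exp (INR n * x).
Proof.
  induction n; simpl pow. - simpl. rewrite Rmult_0_l, exp_0. reflexivity.
  - rewrite IHn, S_INR, <- exp_plus. f_equal. ring.
Qed.

Theorem proposition7p1 :
  forall eta : R, 0 < eta ->
  exists alpha0 : R, 0 < alpha0 /\
  exists X0 : nat, forall X : nat, (X0 <= X)%nat ->
  forall alpha : R,
    exp (- Rpower (ln (INR X)) (3/4 - eta)) <= alpha <= alpha0 ->
    exists f : nat -> R,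
      (forall x : nat, (1 <= x <= X)%nat -> 0 <= f x <= 1) /\
      avg_interval X f = alpha /\
      square_pair_sum X f <= / 100 * alpha ^ 2 * Rpower (INR X) (3/2) /\
      (forall a d L : nat, is_subAP X a d L -> avg_AP a d L f >= 2 * alpha ->
         INR L < INR X * exp (- Rpower (ln (/ alpha)) (1/3))).
Proof.
  intros eta Heta.
  exists (exp (-1000)). split; [apply exp_pos|].
  destruct (exist_nat_ge (exp 256)) as [X0 HX0].
  exists X0. intros X HX alpha [Hlo Hhi].
  assert (HXr : exp 256 <= INR X) by (pose proof (le_INR _ _ HX); lra).
  assert (HXpos : 0 < INR X) by (pose proof (exp_pos 256); lra).
  set (lx := ln (INR X)) in *.
  assert (Hlx : 256 <= lx).
  { unfold lx. rewrite <- (ln_exp 256). apply ln_le_mono; auto. apply exp_pos. }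
  assert (Ha : 0 < alpha) by (pose proof (exp_pos (- Rpower lx (3/4 - eta))); lra).
  set (L := ln (/ alpha)).
  assert (HL1 : 1000 <= L).
  { unfold L. rewrite ln_Rinv by auto.
    assert (ln alpha <= -1000) by (rewrite <- (ln_exp (-1000)); apply ln_le_mono; auto).
    lra. }
  assert (HL2 : L <= lx / 4).
  { assert (L <= Rpower lx (3/4 - eta)).
    { unfold L. rewrite ln_Rinv by auto.
      assert (- Rpower lx (3/4 - eta) <= ln alpha).
      { rewrite <- (ln_exp (- Rpower lx (3/4 - eta))). apply ln_le_mono; auto. apply exp_pos. }
      lra. }
    assert (Rpower lx (3/4 - eta) <= Rpower lx (3/4)) by (apply Rle_Rpower; lra).
    pose proof (Rpower_34 lx Hlx). lra. }
  destruct (cube_root L ltac:(lra)) as [Hu0 Hu3].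
  set (u := Rpower L (1/3)) in *.
  assert (Hu10 : 10 <= u).
  { destruct (Rle_or_lt 10 u) as [h|h]; auto. exfalso.
    assert (u * u < 100) by nra. assert (u * u * u < 1000) by nra. simpl in Hu3. nra. }
  set (B := exp u).
  assert (HB64 : 64 < B) by (pose proof (exp10_gt); pose proof (exp_le_mono _ _ Hu10); unfold B; lra).
  assert (HexpB : exp (- u) = / B) by (unfold B; apply exp_Ropp).
  destruct (pow2_choose B ltac:(lra)) as [k [Hk1 Hk2]].
  assert (Hk6 : (6 <= k)%nat).
  { destruct (le_lt_dec 6 k) as [h|h]; auto. exfalso.
    assert (2 ^ k <= 2 ^ 5) by (apply Rle_pow; [lra|lia]). simpl in H. lra. }
  destruct (MC.many_primes_export k Hk6) as [P [HPl [HPnd HP]]].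
  set (b := (2 ^ k)%nat).
  assert (Hb : INR b = 2 ^ k) by (unfold b; rewrite pow_INR; simpl; f_equal; lra).
  assert (Hb2 : (2 <= b)%nat).
  { unfold b. replace 2%nat with (2 ^ 1)%nat at 1 by reflexivity. apply Nat.pow_le_mono_r; lia. }
  destruct (NT_final b P Hb2 HPl HPnd) as [Sres [HSnd [HSl [HSlt [H1 [H2 Hq1]]]]]].
  { intros p Hp. destruct (HP p Hp) as [[Hp1 Hp2] [Hp3 _]]. split; [apply prime_bridge; auto|]. exact Hp3. }
  set (q := fold_right Nat.mul 1%nat P) in *.
  assert (Hqb : INR q <= 2 ^ 72 * B ^ 54).
  { assert (Hqn : (q <= (2 ^ (3 * k + 1)) ^ 18)%nat).
    { rewrite <- HPl. apply prod_le. intros p Hp. apply HP; auto. }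
    apply le_INR in Hqn. rewrite !pow_INR in Hqn. simpl INR in Hqn.
    replace (1 + 1) with 2 in Hqn by lra.
    rewrite pow_add, (Nat.mul_comm 3 k), pow_mult in Hqn.
    eapply Rle_trans; [exact Hqn|].
    replace (2 ^ 72 * B ^ 54) with (((2 * B) ^ 3 * 2 ^ 1) ^ 18) by ring.
    apply pow_incr. split.
    - apply Rmult_le_pos; apply pow_le; [apply pow_le|]; lra.
    - apply Rmult_le_compat_r; [simpl; lra|]. apply pow_incr. split; [apply pow_le|]; lra. }
  set (Q := INR q) in *.
  set (Y := exp (lx / 4)).
  assert (HY4 : Y * Y * (Y * Y) = INR X).
  { unfold Y. rewrite <- !exp_plus. replace (lx / 4 + lx / 4 + (lx / 4 + lx / 4)) with lx by field.
    unfold lx. apply exp_ln; auto. }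
  assert (HY64 : 64 < Y).
  { unfold Y. pose proof exp10_gt. pose proof (exp_le_mono 10 (lx / 4) ltac:(lra)). lra. }
  assert (HK : / alpha = exp L) by (unfold L; rewrite exp_ln; auto; apply Rinv_0_lt_compat; auto).
  assert (HKY : / alpha <= Y) by (rewrite HK; apply exp_le_mono; lra).
  assert (HQ1 : 1 <= Q) by (unfold Q; apply (le_INR 1); lia).
  assert (HQB : Q * B <= / alpha).
  { rewrite HK. apply Rle_trans with (2 ^ 72 * B ^ 55).
    { replace (2 ^ 72 * B ^ 55) with (2 ^ 72 * B ^ 54 * B) by ring.
      apply Rmult_le_compat_r; lra. }
    assert (H272 : 2 ^ 72 <= exp (INR 72 * 1)).
    { rewrite <- exp_pow_n. apply pow_incr. pose proof exp1_gt2. lra. }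
    unfold B. rewrite exp_pow_n. eapply Rle_trans.
    { apply Rmult_le_compat_r; [apply Rlt_le, exp_pos|exact H272]. }
    rewrite <- exp_plus. apply exp_le_mono. rewrite <- Hu3. simpl INR. simpl pow.
    assert (u * u >= 100) by nra. nra. }
  assert (HB1 : 1 <= B) by lra.
  assert (HQY : Q * B <= Y) by lra.
  assert (HQY' : Q <= Y) by nra.
  assert (HBY : B <= Y) by nra.
  assert (HsX : sqrt (INR X) = Y * Y).
  { rewrite <- HY4. apply sqrt_square. nra. }
  assert (HY2 : 64 * Y <= Y * Y) by nra.
  assert (HY3 : Y * Y < Y * Y * (Y * Y)) by nra.
  assert (HBB : B * B <= Y * Y) by nra.
  destruct (core X q b Sres alpha B) as [f [Hf1 [Hf2 [Hf3 Hf4]]]]; auto.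
  - fold Q. assert (alpha * Q <= alpha * / alpha) by (apply Rmult_le_compat_l; nra).
    rewrite Rinv_r in H by lra. exact H.
  - rewrite Hb. exact Hk1.
  - rewrite HSl. simpl. lra.
  - fold Q. rewrite <- HY4. lra.
  - fold Q. rewrite HsX. lra.
  - fold Q. rewrite <- HY4. lra.
  - fold Q. rewrite <- HY4. lra.
  - exists f. split; [exact Hf1|]. split; [exact Hf2|]. split.
    + replace (Rpower (INR X) (3/2)) with (INR X * sqrt (INR X)); [exact Hf3|].
      replace (3/2) with (1 + /2) by field. rewrite Rpower_plus, Rpower_1, Rpower_sqrt; auto.
    + intros a d L0 Hs Hav. rewrite HexpB. specialize (Hf4 a d L0 Hs Hav). exact Hf4.
Qed.
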